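(* Let $(G,V^\infty,T,k)$ be an instance of \textsc{OddMultiwayNodeCut} with $G$ a DAG. Let $M^*$ be a minimum-size solution chosen as follows: among all minimum-size solutions $S$, it maximizes $|r_G(S)\cup f_G(S)\cup S|$, and among those it maximizes $|r_G(S)|$. Then: - $M^*$ is thin; - for every node $v\in r_G(M^* )$, some important $v\rightarrow T$ separator is contained in $M^*$.
   Context: Paths are simple directed paths; a path is odd if it has an odd number of edges. An instance $(G,V^\infty,T,k)$ consists of a DAG $G$, protected nodes $V^\infty\subseteq V(G)$, terminals $T\subseteq V^\infty$ and $k\in\mathbb{Z}_+$. A $T$-path has both ends in $T$. A solution is a set $M\subseteq V(G)\setminus V^\infty$ intersecting every odd $T$-path. $\mathcal{R}_H(X)$ is the set of nodes reachable from $X$ in $H$, including $X$. The shadows are $f_G(M):=V(G\setminus M)\setminus\mathcal{R}_{G\setminus M}(T)$, and $r_G(M):=$ the set of $v\in V(G)\setminus M$ with no path to $T$ in $G\setminus M$. A set $M$ is thin if no $v\in M$ lies in $r_G(M\setminus\{v\})$. An $X\rightarrow Y$ separator is a set $S\subseteq V(G)\setminus V^\infty$ such that $G\setminus S$ has no $X$-to-$Y$ path. Separator $S'$ dominates separator $S$ if $|S'|\le|S|$ and $\mathcal{R}_{G\setminus S}(X)\subsetneq\mathcal{R}_{G\setminus S'}(X)$. An important separator is an inclusion-minimal separator dominated by no other separator. *)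

(* Defs.v *)
From mathcomp Require Import all_boot.
Set Implicit Arguments. Unset Strict Implicit. Unset Printing Implicit Defensive.

Section Defs.
Variables (V : finType) (e : rel V).

Definition is_dag : Prop :=
  forall (x : V) (p : seq V), path e x p -> last x p = x -> p = [::].

(* a simple directed path x :: p ; its number of edges is size p *)
Definition dpath (x : V) (p : seq V) : bool := path e x p && uniq (x :: p).

Definition del_rel (S : {set V}) : rel V :=
  [rel a b | [&& e a b, a \notin S & b \notin S]].

Definition reachR (S X : {set V}) : {set V} :=
  [set v | (v \notin S) &&
           [exists x in X, (x \notin S) && connect (del_rel S) x v]].

Definition solution (Vinf T M : {set V}) : Prop :=
  M \subset ~: Vinf /\
  forall (x : V) (p : seq V), dpath x p -> x \in T -> last x p \in T ->
    odd (size p) -> has (fun v => v \in M) (x :: p).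

Definition fshadow (T M : {set V}) : {set V} := (~: M) :\: reachR M T.

Definition rshadow (T M : {set V}) : {set V} :=
  [set v | (v \notin M) && ~~ [exists t in T, connect (del_rel M) v t]].

Definition thin (T M : {set V}) : Prop :=
  forall v, v \in M -> v \notin rshadow T (M :\ v).

Definition separator (Vinf X Y S : {set V}) : Prop :=
  S \subset ~: Vinf /\
  ~ (exists x y, [/\ x \in X, y \in Y, x \notin S, y \notin S &
                     connect (del_rel S) x y]).

Definition dominates (X S' S : {set V}) : Prop :=
  #|S'| <= #|S| /\ reachR S X \proper reachR S' X.

Definition important_separator (Vinf X Y S : {set V}) : Prop :=
  [/\ separator Vinf X Y S,
      (forall S', separator Vinf X Y S' -> S' \subset S -> S' = S) &
      ~ (exists S', separator Vinf X Y S' /\ dominates X S' S)].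

End Defs.

(* Main.v *)
Require Import Defs.
From mathcomp Require Import all_boot.
From mathcomp Require Import zify.
From Stdlib Require Import Classical.

Set Implicit Arguments. Unset Strict Implicit. Unset Printing Implicit Defensive.

Lemma notin_sub (T : finType) (A B : {set T}) x :
  A \subset B -> x \notin B -> x \notin A.
Proof. by move=> AB; apply: contra; apply: (subsetP AB). Qed.

Lemma del_sub (V : finType) (e : rel V) (A B : {set V}) :
  A \subset B -> forall x y, connect (del_rel e B) x y -> connect (del_rel e A) x y.
Proof.
move=> AB; apply: connect_sub => x y /= /and3P[exy xB yB]; apply: connect1.
by rewrite /del_rel /= exy (notin_sub AB xB) (notin_sub AB yB).
Qed.

Lemma path_suffix (V : finType) (e : rel V) (A : {set V}) x p u :
  path (del_rel e A) x p -> u \in x :: p -> connect (del_rel e A) u (last x p).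
Proof.
elim: p x => [|y p IH] x /=.
  by rewrite inE => _ /eqP ->; exact: connect0.
move=> /andP[hxy hp]; rewrite inE => /orP[/eqP->|hu].
  by apply: (connect_trans (connect1 hxy)); apply/connectP; exists p.
exact: IH.
Qed.

Lemma path_del (V : finType) (e : rel V) (A : {set V}) x p :
  path e x p -> all (fun u => u \notin A) (x :: p) -> path (del_rel e A) x p.
Proof.
elim: p x => //= y p IH x /andP[exy hp] /and3P[xA yA hall].
rewrite /del_rel /= exy xA yA /=; apply: IH => //=; by rewrite yA hall.
Qed.

Lemma path_del1 (V : finType) (e : rel V) (A : {set V}) z y p :
  path (del_rel e (A :\ z)) y p -> z \notin y :: p -> path (del_rel e A) y p.
Proof.
elim: p y => //= x p IH y /andP[/and3P[eyx yA xA] hp].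
rewrite !inE !negb_or => /and3P[zy zx zp].
rewrite /del_rel /= eyx; move: yA xA; rewrite !inE !negb_and !negbK.
move=> hy hx.
have yA' : y \notin A by move: hy; rewrite (eq_sym y z) (negbTE zy).
have xA' : x \notin A by move: hx; rewrite (eq_sym x z) (negbTE zx).
rewrite yA' xA' /=; apply: IH => //.
by rewrite inE negb_or zx.
Qed.

Lemma reach_step (V : finType) (e : rel V) (S X : {set V}) w u :
  w \in reachR e S X -> e w u -> u \notin S -> u \in reachR e S X.
Proof.
rewrite !inE => /andP[wS /existsP[x /andP[xX /andP[xS cxw]]]] ewu uS.
rewrite uS /=; apply/existsP; exists x; rewrite xX xS /=.
by apply: (connect_trans cxw); apply: connect1; rewrite /del_rel /= ewu wS uS.
Qed.

Lemma reach_mono (V : finType) (e : rel V) (X S1 S2 : {set V}) :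
  S1 \subset S2 -> reachR e S2 X \subset reachR e S1 X.
Proof.
move=> sub; apply/subsetP => y; rewrite !inE.
move=> /andP[yS /existsP[x /andP[xX /andP[xS c]]]].
rewrite (notin_sub sub yS) /=; apply/existsP; exists x.
by rewrite xX (notin_sub sub xS) /= (del_sub sub c).
Qed.

Lemma T_notin (V : finType) (Vinf T S : {set V}) t :
  T \subset Vinf -> S \subset ~: Vinf -> t \in T -> t \notin S.
Proof.
move=> TV SV tT; apply/negP => tS.
by have := subsetP SV _ tS; rewrite inE (subsetP TV _ tT).
Qed.

Lemma rsh_notin (V : finType) (e : rel V) (T S : {set V}) y :
  y \in rshadow e T S -> y \notin S.
Proof. by rewrite inE => /andP[]. Qed.

Lemma min_thin (V : finType) (e : rel V) (Vinf T M : {set V}) :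
  solution e Vinf T M -> (forall S, solution e Vinf T S -> #|M| <= #|S|) ->
  thin e T M.
Proof.
move=> [MV Mhit] Mmin v vM; apply/negP => vr.
have sol : solution e Vinf T (M :\ v).
  split; first by apply: subset_trans MV; exact: subsetDl.
  move=> x p dp xT lT op.
  case: (boolP (has (fun u => u \in M :\ v) (x :: p))) => // nh; exfalso.
  have allA : all (fun u => u \notin M :\ v) (x :: p).
    apply/allP => u up; apply/negP => uA; move/negP: nh; apply; apply/hasP.
    by exists u.
  move/hasP: (Mhit x p dp xT lT op) => [u up uM].
  have uv : u = v.
    case: (eqVneq u v) => // neq; exfalso.
    by have := allP allA u up; rewrite /= !inE neq uM.
  subst u; move: dp => /andP[pe _].
  have c := path_suffix (path_del pe allA) up.
  move: vr; rewrite inE => /andP[_ /negP]; apply; apply/existsP.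
  by exists (last x p); rewrite lT c.
have := Mmin _ sol; rewrite [#|M|](cardsD1 v) vM /=; lia.
Qed.

Lemma exmax (A : Type) (P : A -> Prop) (w : A -> nat) B :
  (forall x, w x <= B) -> forall x0, P x0 ->
  exists x, P x /\ forall y, P y -> w y <= w x.
Proof.
move=> wB.
suff H : forall n x0, B - w x0 <= n -> P x0 ->
  exists x, P x /\ forall y, P y -> w y <= w x.
  by move=> x0 P0; apply: (H (B - w x0) x0).
elim=> [|n IH] x0 hn P0.
  exists x0; split => // y Py; have := wB y; lia.
destruct (classic (exists y, P y /\ w x0 < w y)) as [[y [Py lt]]|H].
  by apply: (IH y) => //; lia.
exists x0; split => // y Py; rewrite leqNgt; apply/negP => lt; apply: H.
by exists y.
Qed.

Lemma wlt (a b c d N : nat) : a < b -> c < N -> a * N + c < b * N + d.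
Proof. move=> ab cN; have := leq_mul ab (leqnn N); rewrite mulSn; lia. Qed.

Lemma arith1 a b d i m : b <= a -> d <= b -> m = a - b + d - i -> i <= d -> a <= m ->
  m = a /\ d = b /\ i = 0.
Proof. lia. Qed.

Lemma arith2 ri ru r s0i s0d s0 sd s' u rm' :
  ri + ru = r -> s0i + s0d = s0 -> s0i + sd = s' -> s' = s0 ->
  u = ru + s0d - 0 -> u <= rm' -> rm' <= r -> sd <= ri.
Proof. lia. Qed.

Lemma arith3 a1 a2 s1 s2 n N : a2 * N + (n - s2) <= a1 * N + (n - s1) ->
  a1 <= a2 -> s1 <= n -> s1 <= s2.
Proof. move=> h12 ha hs; have := leq_mul ha (leqnn N); lia. Qed.

Theorem corollary2p10 (V : finType) (e : rel V) (Vinf T : {set V}) (k : nat)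
  (Mstar : {set V}) :
  is_dag e -> T \subset Vinf -> 0 < k ->
  solution e Vinf T Mstar ->
  (forall S, solution e Vinf T S -> #|Mstar| <= #|S|) ->
  (forall S, solution e Vinf T S -> #|S| = #|Mstar| ->
     #|rshadow e T S :|: fshadow e T S :|: S|
       <= #|rshadow e T Mstar :|: fshadow e T Mstar :|: Mstar|) ->
  (forall S, solution e Vinf T S -> #|S| = #|Mstar| ->
     #|rshadow e T S :|: fshadow e T S :|: S|
       = #|rshadow e T Mstar :|: fshadow e T Mstar :|: Mstar| ->
     #|rshadow e T S| <= #|rshadow e T Mstar|) ->
  thin e T Mstar /\
  (forall v, v \in rshadow e T Mstar ->
     exists S, important_separator e Vinf [set v] T S /\ S \subset Mstar).
Proof.
move=> _ TV _ Msol Mmin H2 H3.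
split; first exact: min_thin Msol Mmin.
move=> v vr.
have [MV Mhit] := Msol.
move: (vr); rewrite inE => /andP[vM vnoT].
set R := reachR e Mstar [set v].
set S0 := [set u in Mstar | [exists w in R, e w u]].
have S0M : S0 \subset Mstar by apply/subsetP => u; rewrite inE => /andP[].
have RconnV : forall y, y \in R -> connect (del_rel e Mstar) v y.
  move=> y; rewrite inE => /andP[_ /existsP[x /andP[]]].
  by rewrite inE => /eqP-> /andP[_ c].
have vR : v \in R.
  rewrite inE vM /=; apply/existsP; exists v; by rewrite inE eqxx vM connect0.
have stayR : forall x p, x \in R -> path (del_rel e S0) x p -> last x p \in R.
  move=> x p; elim: p x => //= y p IH x xR /andP[hxy hp]; apply: IH => //.
  move: hxy => /and3P[exy _ yS0].
  have yM : y \notin Mstar.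
    apply/negP => yM; move: yS0; rewrite inE yM /= => /negP; apply.
    by apply/existsP; exists x; rewrite xR exy.
  exact: reach_step xR exy yM.
have S0sep : separator e Vinf [set v] T S0.
  split; first exact: subset_trans S0M MV.
  move=> [x [y [xv yT xS yS c]]]; move: xv; rewrite inE => /eqP ?; subst x.
  move/connectP: c => [p hp yl]; subst y.
  have c2 := RconnV _ (stayR _ _ vR hp).
  by move/negP: vnoT; apply; apply/existsP; exists (last v p); rewrite yT c2.
have RS0 : R \subset reachR e S0 [set v].
  apply/subsetP => y yR.
  have yM : y \notin Mstar by move: yR; rewrite inE => /andP[].
  rewrite inE (notin_sub S0M yM) /=; apply/existsP; exists v.
  by rewrite inE eqxx (notin_sub S0M vM) /= (del_sub S0M (RconnV _ yR)).
pose cand S := separator e Vinf [set v] T S /\ #|S| <= #|S0| /\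
  R \subset reachR e S [set v].
pose N := #|V|.+1.
pose wt S := #|reachR e S [set v]| * N + (#|V| - #|S|).
have wB : forall S, wt S <= #|V| * N + #|V|.
  move=> S; rewrite /wt; have := max_card (reachR e S [set v]) => h.
  have := leq_mul h (leqnn N); lia.
have [S' [[sepS' [cardS' RS']] maxS']] := @exmax _ cand wt _ wB S0 (conj S0sep (conj (leqnn _) RS0)).
set R' := reachR e S' [set v].
have [S'V S'nosep] := sepS'.
have RconnV' : forall y, y \in R' -> connect (del_rel e S') v y.
  move=> y; rewrite inE => /andP[_ /existsP[x /andP[]]].
  by rewrite inE => /eqP-> /andP[_ c].
have vR' : v \in R' by apply: (subsetP RS').
have F3 : forall x t, x \in R' -> t \in T -> connect (del_rel e S') x t -> False.
  move=> x t xR tT c; apply: S'nosep; exists v, t; split => //.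
  - by rewrite inE.
  - by move: vR'; rewrite inE => /andP[].
  - exact: T_notin S'V tT.
  - exact: connect_trans (RconnV' _ xR) c.
have F2 : forall u, u \in S0 -> u \notin S' -> u \in R'.
  move=> u; rewrite inE => /andP[uM /existsP[w0 /andP[w0R ew]]] uS.
  exact: reach_step (subsetP RS' _ w0R) ew uS.
have L0 : forall (A : {set V}) y t, Mstar :\: S0 \subset A -> S' \subset A -> y \notin A ->
    connect (del_rel e A) y t -> t \in T -> y \notin Mstar.
  move=> A y t h1 h2 yA c tT; apply/negP => yM.
  have yS0 : y \in S0.
    apply/negPn/negP => yn; move/negP: yA; apply; apply: (subsetP h1).
    by rewrite inE yn yM.
  have yS' : y \notin S' := notin_sub h2 yA.
  exact: (F3 y t (F2 _ yS0 yS') tT (del_sub h2 c)).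
have L : forall (A : {set V}) x y t, Mstar :\: S0 \subset A -> S' \subset A -> x \notin A ->
    connect (del_rel e A) x y -> connect (del_rel e A) y t -> t \in T ->
    connect (del_rel e Mstar) x y.
  move=> A x y t h1 h2 xA /connectP[p hp ->] c tT.
  elim: p x xA hp c => [|z p IH] x xA /= hp c; first exact: connect0.
  move: hp => /andP[hxz hp].
  have zA : z \notin A by case/and3P: hxz.
  have cz := IH z zA hp c.
  have czl : connect (del_rel e A) z (last z p) by apply/connectP; exists p.
  have zM := L0 A z t h1 h2 zA (connect_trans czl c) tT.
  have xM := L0 A x t h1 h2 xA (connect_trans (connect1 hxz) (connect_trans czl c)) tT.
  apply: connect_trans cz; apply: connect1.
  by move: hxz => /and3P[exz _ _]; rewrite /del_rel /= exz xM zM.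
set M' := (Mstar :\: S0) :|: S'.
have h1' : Mstar :\: S0 \subset M' := subsetUl _ _.
have h2' : S' \subset M' := subsetUr _ _.
have M'sol : solution e Vinf T M'.
  split.
    rewrite subUset; apply/andP; split => //.
    by apply: subset_trans MV; exact: subsetDl.
  move=> x p dp xT lT op.
  case: (boolP (has (fun u => u \in M') (x :: p))) => // nh; exfalso.
  have allA : all (fun u => u \notin M') (x :: p).
    apply/allP => u up; apply/negP => uA; move/negP: nh; apply; apply/hasP.
    by exists u.
  move/hasP: (Mhit x p dp xT lT op) => [u up uM].
  move: dp => /andP[pe _].
  have pd := path_del pe allA.
  have uA : u \notin M' := allP allA u up.
  by have := L0 M' u (last x p) h1' h2' uA (path_suffix pd up) lT; rewrite uM.
have cM' := Mmin _ M'sol.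
have e1 : #|M'| = #|Mstar :\: S0| + #|S'| - #|(Mstar :\: S0) :&: S'| := cardsU _ _.
have e2 := cardsDS S0M.
have s0le := subset_leq_card S0M.
have Ile := subset_leq_card (subsetIr (Mstar :\: S0) S').
rewrite e2 in e1.
have [cardeq [S'eq Ieq]] := arith1 s0le cardS' e1 Ile cM'.
have I0 : (Mstar :\: S0) :&: S' = set0.
  by apply/eqP; rewrite -cards_eq0; apply/eqP.
have S'MS0 : forall z, z \in S' -> z \in Mstar -> z \in S0.
  move=> z zS zM; apply/negPn/negP => zn.
  have : z \in (Mstar :\: S0) :&: S' by rewrite in_setI in_setD zn zM zS.
  by rewrite I0 inE.
have M'min : forall S, solution e Vinf T S -> #|M'| <= #|S|.
  by move=> S sol; rewrite cardeq; apply: Mmin.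
have thinM' := min_thin M'sol M'min.
have hsub : rshadow e T Mstar :|: fshadow e T Mstar :|: Mstar \subset
            rshadow e T M' :|: fshadow e T M' :|: M'.
  apply/subsetP => y hy; apply/negPn/negP => hn.
  move: hn; rewrite in_setU negb_or => /andP[hh yM'].
  move: hh; rewrite in_setU negb_or => /andP[yr yf].
  have [t2 t2T c2] : exists2 t2, t2 \in T & connect (del_rel e M') y t2.
    move: yr; rewrite inE yM' /= negbK => /existsP[t /andP[tT c]].
    by exists t.
  have [t1 [t1T t1M c1]] : exists t1, [/\ t1 \in T, t1 \notin M' & connect (del_rel e M') t1 y].
    move: yf; rewrite in_setD in_setC yM' andbT negbK inE.
    move=> /andP[_ /existsP[t /andP[tT /andP[tM c]]]].
    by exists t; split.
  have yM := L0 M' y t2 h1' h2' yM' c2 t2T.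
  have c1M := L M' t1 y t2 h1' h2' t1M c1 c2 t2T.
  have c2M := L M' y t2 t2 h1' h2' yM' c2 (connect0 _ _) t2T.
  have t1M0 := L0 M' t1 t2 h1' h2' t1M (connect_trans c1 c2) t2T.
  move: hy; rewrite !in_setU (negbTE yM) orbF => /orP[].
    rewrite inE yM /= => /existsP; apply; exists t2; by rewrite t2T.
  rewrite in_setD in_setC yM andbT => /negP; apply.
  rewrite inE yM /=; apply/existsP; exists t1; by rewrite t1T t1M0.
have hc1 := subset_leq_card hsub.
have hc2 := H2 _ M'sol cardeq.
have rle := H3 _ M'sol cardeq (anti_leq (introT andP (conj hc2 hc1))).
have hsub2 : (rshadow e T Mstar :\: S') :|: (S0 :\: S') \subset rshadow e T M'.
  apply/subsetP => y; rewrite in_setU => /orP[].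
    rewrite in_setD => /andP[yS' yr].
    have yM := rsh_notin yr.
    have yM' : y \notin M' by rewrite in_setU in_setD (negbTE yM) (negbTE yS') andbF.
    rewrite inE yM' /=; apply/negP => /existsP[t /andP[tT c]].
    have := L M' y t t h1' h2' yM' c (connect0 _ _) tT => cM.
    move: yr; rewrite inE => /andP[_ /negP]; apply; apply/existsP; exists t.
    by rewrite tT.
  rewrite in_setD => /andP[yS' yS0].
  have yM' : y \notin M' by rewrite in_setU in_setD yS0 /= (negbTE yS').
  rewrite inE yM' /=; apply/negP => /existsP[t /andP[tT c]].
  by have := L0 M' y t h1' h2' yM' c tT; rewrite (subsetP S0M _ yS0).
have Idis : (rshadow e T Mstar :\: S') :&: (S0 :\: S') = set0.
  apply/setP => y; rewrite in_set0; apply/negP.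
  rewrite in_setI !in_setD => /andP[/andP[_ yr] /andP[_ yS0]].
  by move: (rsh_notin yr); rewrite (subsetP S0M _ yS0).
have c4 := cardsU (rshadow e T Mstar :\: S') (S0 :\: S').
rewrite Idis cards0 in c4.
have c5 := subset_leq_card hsub2.
have c6 := cardsID S' (rshadow e T Mstar).
have c7 := cardsID S' S0.
have c8 := cardsID Mstar S'.
have SM : S' :&: Mstar = S0 :&: S'.
  apply/setP => z; rewrite !in_setI.
  apply/andP/andP => [[zS zM]|[zS0 zS]]; split => //.
    exact: S'MS0.
  exact: (subsetP S0M).
rewrite SM in c8.
have sub3 : rshadow e T Mstar :&: S' \subset S' :\: Mstar.
  apply/subsetP => z; rewrite in_setI in_setD => /andP[zr zS].
  by rewrite zS (rsh_notin zr).
have eqset : rshadow e T Mstar :&: S' = S' :\: Mstar.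
  apply/eqP; rewrite eqEcard sub3 /=.
  exact: (arith2 c6 c7 c8 S'eq c4 c5 rle).
have S'sub : S' \subset Mstar.
  apply/subsetP => z zS; apply/negPn/negP => zM.
  have zr : z \in rshadow e T Mstar.
    have : z \in S' :\: Mstar by rewrite in_setD zM zS.
    by rewrite -eqset in_setI => /andP[].
  have zM' : z \in M' := subsetP h2' _ zS.
  have := thinM' z zM'.
  rewrite inE in_setD1 eqxx /= negbK => /existsP[t /andP[tT c]].
  move/connectP: c => [p hp tl]; subst t.
  move: tT; case: (shortenP hp) => [[|y p'] hp' up' _] /= tT.
    by move: (T_notin TV S'V tT); rewrite zS.
  move: hp' => /andP[hzy hp'].
  move: up' => /andP[znin _].
  have pM' := path_del1 hp' znin.
  have yM' : y \notin M'.
    move: hzy => /and3P[_ _]; rewrite in_setD1 negb_and negbK.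
    have zy : (y == z) = false.
      by apply/negbTE; move: znin; rewrite inE negb_or eq_sym => /andP[].
    by rewrite zy.
  have c' : connect (del_rel e M') y (last y p') by apply/connectP; exists p'.
  have yM := L0 M' y _ h1' h2' yM' c' tT.
  have cy := L M' y (last y p') (last y p') h1' h2' yM' c' (connect0 _ _) tT.
  move: zr; rewrite inE zM /= => /existsP; apply; exists (last y p'); rewrite tT /=.
  apply: connect_trans cy; apply: connect1.
  by move: hzy => /and3P[ezy _ _]; rewrite /del_rel /= ezy zM yM.
exists S'; split => //; split => //.
  move=> S'' sep'' sub.
  have rsub := reach_mono e [set v] sub.
  have c'' : cand S''.
    split => //; split; first exact: leq_trans (subset_leq_card sub) cardS'.
    exact: subset_trans RS' rsub.
  have hw := maxS' _ c''; rewrite /wt in hw.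
  have h1 := subset_leq_card rsub.
  have h3 := max_card (mem S').
  apply/eqP; rewrite eqEcard sub /=.
  exact: arith3 hw h1 h3.
move=> [S3 [sep3 [c3 pr3]]].
have c3' : cand S3.
  split => //; split; first exact: leq_trans c3 cardS'.
  exact: subset_trans RS' (proper_sub pr3).
have hw := maxS' _ c3'; rewrite /wt in hw.
have hp := proper_card pr3.
have cN : #|V| - #|S'| < N by rewrite /N ltnS leq_subr.
have := wlt (#|V| - #|S3|) hp cN.
by rewrite ltnNge hw.
Qed.
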